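(* Let $P(t)$ be a reciprocal polynomial, written $P(t)=(t-1)^L(t+1)^KP^*(t)$ with $L,K\ge0$ and $P^*(\pm1)\neq0$, and put $\widetilde P(t)=(t-1)^{2\lfloor L/2\rfloor}(t+1)^{2\lfloor K/2\rfloor}P^*(t)$. Then $$Z(\mathfrak I_{P(t)})=\{p(t)e+p(t^{-1})f+q(t)h\in\mathfrak{OA}:\ \widetilde P(t)\mid p(t),\ P(t)\mid q(t)\},$$ divisibility taken in $\mathbb C[t,t^{-1}]$. Consequently $\mathfrak I_{P(t)}$ is closed if and only if $L$ and $K$ are both even.
   Context: Work over $\mathbb C$. $\mathfrak{sl}_2$ has basis $e,f,h$ with $[e,f]=h$, $[h,e]=2e$, $[h,f]=-2f$. $L(\mathfrak{sl}_2)=\mathbb C[t,t^{-1}]\otimes\mathfrak{sl}_2$ is the loop algebra with bracket $[p(t)x,q(t)y]=p(t)q(t)[x,y]$. The Onsager algebra is the Lie subalgebra $\mathfrak{OA}=\{p(t)e+p(t^{-1})f+q(t)h:\ p,q\in\mathbb C[t,t^{-1}],\ q(t^{-1})=-q(t)\}$ of $L(\mathfrak{sl}_2)$. A reciprocal polynomial is a nonconstant monic $P\in\mathbb C[t]$ with $P(t)=\pm t^{\deg P}P(t^{-1})$. For a reciprocal polynomial $P$, $\mathfrak I_{P(t)}=\{p(t)e+p(t^{-1})f+q(t)h\in\mathfrak{OA}:\ p(t),q(t)\in P(t)\mathbb C[t,t^{-1}]\}$; it is an ideal of $\mathfrak{OA}$. For an ideal $I$ of a Lie algebra $\mathfrak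 L$, $Z(I)=\{x\in\mathfrak L:[x,\mathfrak L]\subset I\}$; a nonzero proper ideal $I$ is called closed if $Z(I)=I$. $\lfloor r\rfloor$ is the integer part. *)

(* Defs.v *)
From mathcomp Require Import all_boot all_algebra.
From mathcomp Require Import Rstruct complex.
Set Implicit Arguments. Unset Strict Implicit. Unset Printing Implicit Defensive.
Import GRing.Theory.
Local Open Scope ring_scope.

Definition CC : closedFieldType := (Rdefinitions.R)[i].

(* ---------- Laurent polynomials C[t,t^-1] ----------
   A Laurent polynomial is represented by a pair (p, n) standing for
   t^(-n) * p(t); two representatives are identified by [lp_eq]. *)
Definition laurent := ({poly CC} * nat)%type.

Definition lp_eq (x y : laurent) : Prop := x.1 * 'X^(y.2) = y.1 * 'X^(x.2).
Definition lp_poly (p : {poly CC}) : laurent := (p, 0%N).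
Definition lp_add (x y : laurent) : laurent :=
  (x.1 * 'X^(y.2) + y.1 * 'X^(x.2), (x.2 + y.2)%N).
Definition lp_opp (x : laurent) : laurent := (- x.1, x.2).
Definition lp_scale (c : CC) (x : laurent) : laurent := (c *: x.1, x.2).
Definition lp_mul (x y : laurent) : laurent := (x.1 * y.1, (x.2 + y.2)%N).
(* substitution t |-> t^-1 :  t^-n p(t)  |->  t^n p(t^-1)
   = t^-(size p) * (t^n * \sum_j p_(size p - j) t^j) *)
Definition lp_inv (x : laurent) : laurent :=
  ('X^(x.2) * \poly_(j < (size x.1).+1) x.1`_(size x.1 - j), size x.1).
Definition lp_dvd (P : {poly CC}) (x : laurent) : Prop :=
  exists y : laurent, lp_eq x (lp_mul (lp_poly P) y).

(* ---------- the loop algebra L(sl2) ----------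
   an element  a(t) e + b(t) f + c(t) h *)
Record loop := Loop { ce : laurent; cf : laurent; ch : laurent }.

Definition loop_eq (x y : loop) : Prop :=
  lp_eq (ce x) (ce y) /\ lp_eq (cf x) (cf y) /\ lp_eq (ch x) (ch y).
Definition loop0 : loop := Loop (lp_poly 0) (lp_poly 0) (lp_poly 0).
Definition loop_add (x y : loop) : loop :=
  Loop (lp_add (ce x) (ce y)) (lp_add (cf x) (cf y)) (lp_add (ch x) (ch y)).
Definition loop_scale (c : CC) (x : loop) : loop :=
  Loop (lp_scale c (ce x)) (lp_scale c (cf x)) (lp_scale c (ch x)).
(* [p x, q y] = p q [x,y], with [e,f]=h, [h,e]=2e, [h,f]=-2f *)
Definition lp_two (x : laurent) : laurent := lp_scale 2 x.
Definition bracket (x y : loop) : loop :=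
  Loop (lp_add (lp_two (lp_mul (ch x) (ce y))) (lp_opp (lp_two (lp_mul (ce x) (ch y)))))
       (lp_add (lp_two (lp_mul (cf x) (ch y))) (lp_opp (lp_two (lp_mul (ch x) (cf y)))))
       (lp_add (lp_mul (ce x) (cf y)) (lp_opp (lp_mul (cf x) (ce y)))).

Definition inOA (x : loop) : Prop :=
  lp_eq (cf x) (lp_inv (ce x)) /\ lp_eq (lp_inv (ch x)) (lp_opp (ch x)).

Definition reciprocal (P : {poly CC}) : Prop :=
  P \is monic /\ (1 < size P)%N /\
  exists s : CC, (s = 1 \/ s = -1) /\
    lp_eq (lp_poly P)
          (lp_scale s (lp_mul (lp_poly 'X^((size P).-1)) (lp_inv (lp_poly P)))).

Definition IP (P : {poly CC}) (x : loop) : Prop :=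
  inOA x /\ lp_dvd P (ce x) /\ lp_dvd P (ch x).

Definition Zid (I : loop -> Prop) (x : loop) : Prop :=
  inOA x /\ forall y, inOA y -> I (bracket x y).

Definition is_ideal (I : loop -> Prop) : Prop :=
  (forall x, I x -> inOA x) /\
  (forall x y, loop_eq x y -> I x -> I y) /\
  I loop0 /\
  (forall x y, I x -> I y -> I (loop_add x y)) /\
  (forall c x, I x -> I (loop_scale c x)) /\
  (forall x y, I x -> inOA y -> I (bracket x y)).

Definition closed_ideal (I : loop -> Prop) : Prop :=
  is_ideal I /\
  (exists x, I x /\ ~ loop_eq x loop0) /\
  (exists x, inOA x /\ ~ I x) /\
  (forall x, Zid I x <-> I x).

(* Main.v *)
Require Import Defs.
From HB Require Import structures.
From mathcomp Require Import all_boot all_algebra.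
From mathcomp Require Import Rstruct complex fraction.
From mathcomp Require Import ring.
Import GRing.Theory Num.Theory.
Local Open Scope ring_scope.

Notation F := {fraction {poly CC}}.
Definition cF : CC -> F := (@tofrac _) \o polyC.
HB.instance Definition _ := GRing.RMorphism.copy cF ((@tofrac _) \o polyC).

Lemma rev_horner (K : fieldType) (q : {poly K}) (z : K) : z != 0 ->
  (\poly_(j < (size q).+1) q`_(size q - j)).[z] = z ^+ size q * q.[z^-1].
Proof.
move=> z0; rewrite horner_poly horner_coef big_ord_recl /= subn0 nth_default // mul0r add0r mulr_sumr.
rewrite (reindex_inj rev_ord_inj) /=; apply: eq_bigr => i _.
have hi := ltn_ord i.
by rewrite /bump leq0n add1n subnSK // subKn ?(ltnW hi) // exprVn mulrCA -expfB // subnSK.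
Qed.

Definition xF : F := tofrac 'X.
Definition E (a : laurent) : F := tofrac a.1 / xF ^+ a.2.
Definition H (a : laurent) : F := (map_poly cF a.1).[xF^-1] * xF ^+ a.2.
Definition ev (z : CC) (a : laurent) : CC := a.1.[z] / z ^+ a.2.

Lemma xF_neq0 : xF != 0.
Proof. by rewrite /xF tofrac_eq0 polyX_eq0. Qed.
Lemma xFn_neq0 n : xF ^+ n != 0.
Proof. by rewrite expf_neq0 // xF_neq0. Qed.

Lemma XnF n : tofrac ('X^n : {poly CC}) = xF ^+ n.
Proof. by rewrite rmorphXn. Qed.

Lemma size_mapcF (p : {poly CC}) : size (map_poly cF p) = size p.
Proof. by rewrite size_map_poly. Qed.

Lemma tofrac_map (p : {poly CC}) : tofrac p = (map_poly cF p).[xF].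
Proof.
rewrite -{1}[p]coefK poly_def rmorph_sum horner_coef size_mapcF.
apply: eq_bigr => i _; by rewrite coef_map -mul_polyC rmorphM rmorphXn.
Qed.

Lemma E_eq a b : lp_eq a b <-> E a = E b.
Proof.
rewrite /lp_eq /E; split => h.
  apply/eqP; rewrite eqr_div ?xFn_neq0 // -!XnF -!rmorphM h //.
move/eqP: h; rewrite eqr_div ?xFn_neq0 // -!XnF -!rmorphM tofrac_eq => /eqP //.
Qed.

Lemma E_poly p : E (lp_poly p) = tofrac p.
Proof. by rewrite /E /= expr0 divr1. Qed.
Lemma fadd (K : fieldType) (a b u v : K) : u != 0 -> v != 0 ->
  (a * v + b * u) / (u * v) = a / u + b / v.
Proof. by move=> hu hv; field; rewrite hu hv. Qed.

Lemma E_add a b : E (lp_add a b) = E a + E b.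
Proof.
by rewrite /E /= rmorphD !rmorphM !rmorphXn -/xF exprD fadd ?xFn_neq0.
Qed.

Lemma fmul (K : fieldType) (a b u v : K) : a / u * (b / v) = (a * b) / (u * v).
Proof. by rewrite mulf_div. Qed.

Lemma E_mul a b : E (lp_mul a b) = E a * E b.
Proof. by rewrite /E /= rmorphM exprD fmul. Qed.
Lemma E_opp a : E (lp_opp a) = - E a.
Proof. by rewrite /E /= rmorphN mulNr. Qed.
Lemma E_scale k a : E (lp_scale k a) = cF k * E a.
Proof. by rewrite /E /= -mul_polyC rmorphM mulrA. Qed.

Lemma H_poly p : H (lp_poly p) = (map_poly cF p).[xF^-1].
Proof. by rewrite /H /= expr0 mulr1. Qed.

Lemma gadd (K : fieldType) (A B u v : K) : u != 0 -> v != 0 ->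
  (A * v^-1 + B * u^-1) * (u * v) = A * u + B * v.
Proof. by move=> hu hv; field; rewrite hu hv. Qed.

Lemma H_add a b : H (lp_add a b) = H a + H b.
Proof.
rewrite /H /= rmorphD !rmorphM /= !map_polyXn !hornerE !exprVn exprD.
by rewrite gadd ?xFn_neq0.
Qed.
Lemma H_mul a b : H (lp_mul a b) = H a * H b.
Proof. by rewrite /H /= rmorphM hornerM exprD mulrACA. Qed.
Lemma H_opp a : H (lp_opp a) = - H a.
Proof. by rewrite /H /= rmorphN hornerN mulNr. Qed.
Lemma H_scale k a : H (lp_scale k a) = cF k * H a.
Proof. by rewrite /H /= map_polyZ hornerZ mulrA. Qed.

Lemma geq (K : fieldType) (A B u v : K) : u != 0 -> v != 0 ->
  A * v^-1 = B * u^-1 -> A * u = B * v.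
Proof.
move=> hu hv h; rewrite (_ : A = B * u^-1 * v); last by rewrite -h mulfVK.
by rewrite mulrAC mulfVK.
Qed.

Lemma H_eq a b : E a = E b -> H a = H b.
Proof.
move/E_eq; rewrite /lp_eq /H => h.
have := congr1 (fun p => (map_poly cF p).[xF^-1]) h => /=.
rewrite !rmorphM /= !map_polyXn !hornerE !exprVn.
exact: geq (xFn_neq0 _) (xFn_neq0 _).
Qed.

Lemma map_rev (p : {poly CC}) : map_poly cF (\poly_(j < (size p).+1) p`_(size p - j)) =
  \poly_(j < (size (map_poly cF p)).+1) (map_poly cF p)`_(size (map_poly cF p) - j).
Proof.
apply/polyP => i; rewrite coef_map !coef_poly size_mapcF.
case: ifP => _; last exact: raddf0.
case: ltnP => h //; rewrite nth_default //; exact: raddf0.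
Qed.

Lemma E_inv a : E (lp_inv a) = H a.
Proof.
rewrite /E /H /lp_inv /= rmorphM rmorphXn /= -/xF tofrac_map map_rev rev_horner ?xF_neq0 //.
rewrite size_mapcF mulrA mulrAC mulfK ?xFn_neq0 // mulrC //.
Qed.

Lemma g3 (K : fieldType) (a v T : K) : v != 0 -> a^-1 * (v^-1 * T) * v = T / a.
Proof. by move=> hv; rewrite -mulrA [_ * v]mulrAC mulVf // mul1r mulrC. Qed.

Lemma H_inv a : H (lp_inv a) = E a.
Proof.
rewrite /E /H /lp_inv /= rmorphM /= map_polyXn hornerM hornerXn map_rev rev_horner ?invr_eq0 ?xF_neq0 //.
rewrite invrK -tofrac_map size_mapcF exprVn.
by rewrite !exprVn g3 ?xFn_neq0.
Qed.

Lemma ev_eq z a b : z != 0 -> E a = E b -> ev z a = ev z b.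
Proof.
move=> z0 /E_eq; rewrite /lp_eq /ev => h.
have := congr1 (fun p => p.[z]) h => /= /eqP.
rewrite !hornerM !hornerXn => h2; apply/eqP; rewrite eqr_div ?expf_neq0 //.
Qed.

Lemma ev_poly z p : ev z (lp_poly p) = p.[z].
Proof. by rewrite /ev /= expr0 divr1. Qed.
Lemma ev_add z a b : z != 0 -> ev z (lp_add a b) = ev z a + ev z b.
Proof.
move=> z0; rewrite /ev /= hornerD !hornerM !hornerXn exprD.
by rewrite fadd ?expf_neq0.
Qed.
Lemma ev_mul z a b : ev z (lp_mul a b) = ev z a * ev z b.
Proof. by rewrite /ev /= hornerM exprD fmul. Qed.
Lemma ev_opp z a : ev z (lp_opp a) = - ev z a.
Proof. by rewrite /ev /= hornerN mulNr. Qed.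
Lemma ev_scale z k a : ev z (lp_scale k a) = k * ev z a.
Proof. by rewrite /ev /= hornerZ mulrA. Qed.

Lemma g4 (K : fieldType) (z A : K) (n s : nat) : z != 0 ->
  z ^+ n * (z ^+ s * A) / z ^+ s = A / z^-1 ^+ n.
Proof.
move=> z0; rewrite exprVn invrK mulrA mulrAC mulfK ?expf_neq0 //.
by rewrite mulrC.
Qed.

Lemma ev_inv z a : z != 0 -> ev z (lp_inv a) = ev z^-1 a.
Proof.
move=> z0; rewrite /ev /lp_inv /= hornerM hornerXn rev_horner //.
exact: g4.
Qed.

Definition Ldiv (D : {poly CC}) (f : F) : Prop := exists b : laurent, f = tofrac D * E b.

Lemma lp_dvdE D a : lp_dvd D a <-> Ldiv D (E a).
Proof.
split=> [[y /E_eq]|[y hy]].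
  by rewrite E_mul E_poly => h; exists y.
by exists y; apply/E_eq; rewrite E_mul E_poly.
Qed.

Lemma coprimeX (D : {poly CC}) n : ~~ root D 0 -> coprimep D ('X ^+ n).
Proof.
move=> h; apply: coprimep_expr.
by have := coprimep_XsubC D 0; rewrite subr0 h.
Qed.

Lemma Ldiv_num D a : ~~ root D 0 -> Ldiv D (E a) <-> D %| a.1.
Proof.
move=> hD; split=> [[b hb]|h].
  have : E a = E (lp_mul (lp_poly D) b) by rewrite E_mul E_poly.
  move/E_eq; rewrite /lp_eq /= add0n => h2.
  rewrite -(Gauss_dvdpl _ (coprimeX D b.2 hD)) h2.
  by rewrite -mulrA dvdp_mulr.
exists (a.1 %/ D, a.2).
rewrite /E /= -{1}(divpK h) rmorphM /= mulrA [_ * tofrac D]mulrC //.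
Qed.

Lemma Ldiv_add D f g : Ldiv D f -> Ldiv D g -> Ldiv D (f + g).
Proof.
move=> [b ->] [c ->]; exists (lp_add b c); by rewrite E_add mulrDr.
Qed.
Lemma Ldiv_opp D f : Ldiv D f -> Ldiv D (- f).
Proof. move=> [b ->]; exists (lp_opp b); by rewrite E_opp mulrN. Qed.
Lemma Ldiv_sub D f g : Ldiv D f -> Ldiv D g -> Ldiv D (f - g).
Proof. by move=> h1 h2; apply: Ldiv_add => //; apply: Ldiv_opp. Qed.
Lemma Ldiv_mulE D f b : Ldiv D f -> Ldiv D (f * E b).
Proof. move=> [c ->]; exists (lp_mul c b); by rewrite E_mul [in RHS]mulrA. Qed.
Lemma Ldiv_Emul D f b : Ldiv D f -> Ldiv D (E b * f).
Proof. by move=> h; rewrite mulrC; apply: Ldiv_mulE. Qed.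
Lemma Ldiv_cF D f k : Ldiv D f -> Ldiv D (cF k * f).
Proof. move=> [c ->]; exists (lp_scale k c); by rewrite E_scale [in RHS]mulrCA. Qed.
Lemma Ldiv_dvd D D' f : Ldiv D f -> D' %| D -> Ldiv D' f.
Proof.
move=> [b ->] /dvdpP [q ->]; exists (lp_mul (lp_poly q) b).
by rewrite E_mul E_poly rmorphM /= [in RHS]mulrCA [in RHS]mulrA.
Qed.
Lemma Ldiv_self D b : Ldiv D (tofrac D * E b).
Proof. by exists b. Qed.
Lemma Ldiv_0 D : Ldiv D 0.
Proof. by exists (lp_poly 0); rewrite E_poly rmorph0 mulr0. Qed.

Lemma Ldiv_coprime D1 D2 a : ~~ root D1 0 -> ~~ root D2 0 -> coprimep D1 D2 ->
  Ldiv D1 (E a) -> Ldiv D2 (E a) -> Ldiv (D1 * D2) (E a).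
Proof.
move=> h1 h2 hc; rewrite !Ldiv_num ?rootM ?negb_or ?h1 ?h2 // => d1 d2.
by rewrite Gauss_dvdp // d1 d2.
Qed.

Lemma ev_root z a : z != 0 -> ev z a = 0 -> Ldiv ('X - z%:P) (E a).
Proof.
move=> z0 h; rewrite Ldiv_num; last by rewrite root_XsubC eq_sym.
rewrite dvdp_XsubCl; apply/eqP; move: h; rewrite /ev => /eqP.
by rewrite mulf_eq0 invr_eq0 expf_eq0 (negbTE z0) andbF orbF => /eqP.
Qed.

Lemma root_ev z a : z != 0 -> Ldiv ('X - z%:P) (E a) -> ev z a = 0.
Proof.
move=> z0 [b hb].
have : E a = E (lp_mul (lp_poly ('X - z%:P)) b) by rewrite E_mul E_poly.
move/(ev_eq _ _ _ z0) ->; by rewrite ev_mul ev_poly hornerXsubC subrr mul0r.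
Qed.

Lemma inOA_iff x : inOA x <-> E (cf x) = H (ce x) /\ H (ch x) = - E (ch x).
Proof.
rewrite /inOA; split=> [[/E_eq h1 /E_eq h2]|[h1 h2]]; split.
- by rewrite -E_inv.
- by rewrite -E_inv -E_opp.
- by apply/E_eq; rewrite E_inv.
- by apply/E_eq; rewrite E_inv E_opp.
Qed.

Lemma H_cf x : inOA x -> H (cf x) = E (ce x).
Proof.
move/inOA_iff=> [h _]; rewrite -E_inv in h.
by rewrite (H_eq _ _ h) H_inv.
Qed.

Lemma E_bre x y : E (ce (bracket x y)) =
  cF 2 * (E (ch x) * E (ce y)) - cF 2 * (E (ce x) * E (ch y)).
Proof. by rewrite /bracket /= /lp_two E_add E_opp !E_scale !E_mul. Qed.
Lemma E_brf x y : E (cf (bracket x y)) =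
  cF 2 * (E (cf x) * E (ch y)) - cF 2 * (E (ch x) * E (cf y)).
Proof. by rewrite /bracket /= /lp_two E_add E_opp !E_scale !E_mul. Qed.
Lemma E_brh x y : E (ch (bracket x y)) = E (ce x) * E (cf y) - E (cf x) * E (ce y).
Proof. by rewrite /bracket /= E_add E_opp !E_mul. Qed.
Lemma H_bre x y : H (ce (bracket x y)) =
  cF 2 * (H (ch x) * H (ce y)) - cF 2 * (H (ce x) * H (ch y)).
Proof. by rewrite /bracket /= /lp_two H_add H_opp !H_scale !H_mul. Qed.
Lemma H_brh x y : H (ch (bracket x y)) = H (ce x) * H (cf y) - H (cf x) * H (ce y).
Proof. by rewrite /bracket /= H_add H_opp !H_mul. Qed.

Lemma alg1 (R : comRingType) (c p q a r cp ca : R) :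
  c * (- q * ca) - c * (cp * - r) = c * (cp * r) - c * (q * ca).
Proof. ring. Qed.
Lemma alg2 (R : comRingType) (p a cp ca : R) :
  cp * p - p * ca = - (p * ca - cp * p).
Proof. ring. Qed.

Lemma OA_br x y : inOA x -> inOA y -> inOA (bracket x y).
Proof.
move=> hx hy; have hcx := H_cf _ hx; have hcy := H_cf _ hy.
move/inOA_iff: hx => [ex hx]; move/inOA_iff: hy => [ey hy].
apply/inOA_iff; split.
  rewrite E_brf H_bre hx hy -ex -ey.
  by rewrite (alg1 _ (cF 2) 0 (E (ch x)) 0 (E (ch y)) (E (cf x)) (E (cf y))).
rewrite H_brh E_brh hcx hcy -ex -ey.
by rewrite opprB.
Qed.

Lemma two_neq0 : (2 : CC) != 0.
Proof. have h : (2 : Rdefinitions.R[i]) != 0 by rewrite pnatr_eq0. exact h. Qed.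

Lemma recip_facts (P : {poly CC}) : reciprocal P ->
  ~~ root P 0 /\ exists s : CC, s != 0 /\
    tofrac P = cF s * (xF ^+ (size P).-1 * H (lp_poly P)).
Proof.
move=> [mon [sz [s [hs heq]]]].
have s0 : s != 0 by case: hs => ->; rewrite ?oppr_eq0 oner_neq0.
split; last first.
  exists s; split => //.
  by move/E_eq: heq; rewrite E_poly E_scale E_mul E_poly E_inv rmorphXn.
move: heq; rewrite /lp_eq /= => /(congr1 (fun q : {poly CC} => q`_(size P))).
rewrite add0n coefMXn ltnn subnn !expr0 mulr1 mul1r coefZ coefXnM.
have -> : (size P < (size P).-1)%N = false by rewrite ltnNge leq_pred.
rewrite coef_poly.
have h1 : (size P - (size P).-1 = 1)%N by case: (size P) sz => // n _; rewrite subSn // subnn.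
rewrite h1 (_ : (1 < (size P).+1)%N = true); last by apply: ltn_trans sz _.
rewrite subn1 -lead_coefE (monicP mon) mulr1 => h0.
by rewrite /root horner_coef0 h0.
Qed.

Lemma Hp_mul p q : H (lp_poly (p * q)) = H (lp_poly p) * H (lp_poly q).
Proof. by rewrite !H_poly rmorphM hornerM. Qed.
Lemma Hp_exp p n : H (lp_poly (p ^+ n)) = H (lp_poly p) ^+ n.
Proof. by rewrite !H_poly rmorphXn horner_exp. Qed.
Lemma Hp_XsubC z : H (lp_poly ('X - z%:P)) = xF^-1 - cF z.
Proof. by rewrite H_poly rmorphB /= map_polyX map_polyC hornerXsubC. Qed.
Lemma Hp_XaddC z : H (lp_poly ('X + z%:P)) = xF^-1 + cF z.
Proof. by rewrite H_poly rmorphD /= map_polyX map_polyC hornerD hornerX hornerC. Qed.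
Lemma Ep_XsubC z : tofrac ('X - z%:P : {poly CC}) = xF - cF z.
Proof. by rewrite rmorphB. Qed.
Lemma Ep_XaddC z : tofrac ('X + z%:P : {poly CC}) = xF + cF z.
Proof. by rewrite rmorphD. Qed.

Lemma Ep_XsubCn z n : tofrac (('X - z%:P) ^+ n : {poly CC}) = (xF - cF z) ^+ n.
Proof. by rewrite rmorphXn rmorphB. Qed.
Lemma Ep_XaddCn z n : tofrac (('X + z%:P) ^+ n : {poly CC}) = (xF + cF z) ^+ n.
Proof. by rewrite rmorphXn rmorphD. Qed.

Lemma gen3 (K : fieldType) (s u Q h : K) (L M d : nat) : s != 0 -> u != 0 ->
  u - 1 != 0 -> u + 1 != 0 ->
  (u - 1)^+L * (u + 1)^+M * Q = s * (u^+d * ((u^-1 - 1)^+L * (u^-1 + 1)^+M * h)) ->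
  h = (s^-1 * ((-1)^+L)^-1 * u^+(L+M)) / u^+d * Q.
Proof.
move=> s0 u0 m0 p0 e.
have ea : u^-1 - 1 = (u - 1) * (- u^-1) by field.
have eb : u^-1 + 1 = (u + 1) * u^-1 by field.
rewrite ea eb !exprMn exprNn !exprVn in e.
have t0 : (-1 : K) ^+ L != 0 by rewrite expf_neq0 // oppr_eq0 oner_eq0.
have A0 : (u - 1)^+L * (u + 1)^+M != 0 by rewrite mulf_neq0 // expf_neq0.
have eQ : Q = s * (u^+d * ((-1)^+L * (u^+L)^-1 * ((u^+M)^-1 * h))).
  apply: (mulfI A0); rewrite e; ring.
rewrite eQ exprD; field.
by rewrite t0 s0 !expf_neq0.
Qed.

Definition good (D : {poly CC}) := exists w, H (lp_poly D) = E w * tofrac D /\ ev 1 w = 1 /\ ev (-1) w = 1.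

Lemma good_mul p q : good p -> good q -> good (p * q).
Proof.
move=> [w1 [h1 [a1 b1]]] [w2 [h2 [a2 b2]]]; exists (lp_mul w1 w2).
rewrite Hp_mul h1 h2 E_mul rmorphM /= !ev_mul a1 b1 a2 b2 !mulr1; split=> //.
by rewrite [LHS]mulrACA.
Qed.
Lemma good_1 : good 1.
Proof.
by exists (lp_poly 1); rewrite E_poly !ev_poly H_poly !rmorph1 !hornerE.
Qed.
Lemma good_exp p n : good p -> good (p ^+ n).
Proof. move=> h; elim: n => [|n IH]; first exact: good_1. rewrite exprS; exact: good_mul. Qed.

Lemma zinv (z : CC) : z * z = 1 -> z^-1 = z.
Proof. by move=> h; rewrite -[z^-1]mul1r -h mulrK // ; apply/eqP => z0; move: h; rewrite z0 mul0r => /eqP; rewrite eq_sym oner_eq0. Qed.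
Lemma z0 (z : CC) : z * z = 1 -> z != 0.
Proof. by move=> h; apply/eqP => e; move: h; rewrite e mul0r => /eqP; rewrite eq_sym oner_eq0. Qed.
Lemma m1m1 : (-1 : CC) * -1 = 1.
Proof. by rewrite mulrNN mulr1. Qed.
Lemma one1 : (1 : CC) * 1 = 1.
Proof. by rewrite mulr1. Qed.

Lemma good_of D w : H (lp_poly D) = E w * tofrac D -> D.[1] != 0 -> D.[-1] != 0 -> good D.
Proof.
move=> h d1 d2; exists w; split => //.
have key : forall z, z * z = 1 -> D.[z] != 0 -> ev z w = 1.
  move=> z hz dz.
  have : E (lp_inv (lp_poly D)) = E (lp_mul w (lp_poly D)) by rewrite E_inv E_mul E_poly.
  move/(ev_eq _ _ _ (z0 _ hz)); rewrite ev_inv ?(z0 _ hz) // zinv // ev_mul !ev_poly.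
  by move/(congr1 (fun t => t / D.[z])); rewrite mulfK // divff // => ->.
by split; apply: key; rewrite ?m1m1 ?one1.
Qed.

Lemma tofrac_cF k : tofrac (k%:P) = cF k.
Proof. by []. Qed.

Lemma gm (K : fieldType) (u : K) : u != 0 -> (u^-1 - 1)^+2 = (u^+2)^-1 * (u - 1)^+2.
Proof. by move=> h; field. Qed.
Lemma gp (K : fieldType) (u : K) : u != 0 -> (u^-1 + 1)^+2 = (u^+2)^-1 * (u + 1)^+2.
Proof. by move=> h; field. Qed.

Lemma good_sq_m : good (('X - 1) ^+ 2).
Proof.
exists (1, 2%N); rewrite /E /ev /= !hornerC !expr1n !divr1 !sqrrN expr1n invr1; split=> //.
rewrite Hp_exp -polyC1 Hp_XsubC Ep_XsubCn rmorph1 /= mul1r.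
  by rewrite gm // xF_neq0.
by rewrite mulr1.
Qed.
Lemma good_sq_p : good (('X + 1) ^+ 2).
Proof.
exists (1, 2%N); rewrite /E /ev /= !hornerC !expr1n !divr1 !sqrrN expr1n invr1; split=> //.
rewrite Hp_exp -polyC1 Hp_XaddC Ep_XaddCn rmorph1 /= mul1r.
  by rewrite gp // xF_neq0.
by rewrite mulr1.
Qed.

Lemma XsubF_neq0 (z : CC) : xF - cF z != 0.
Proof. by rewrite -Ep_XsubC tofrac_eq0 polyXsubC_eq0. Qed.
Lemma XaddF_neq0 (z : CC) : xF + cF z != 0.
Proof. by rewrite -[cF z]opprK -rmorphN -Ep_XsubC tofrac_eq0 polyXsubC_eq0. Qed.

Lemma E_scaleXn k n d : E (k *: 'X^n, d) = cF k * xF ^+ n / xF ^+ d.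
Proof. by rewrite /E /= -mul_polyC rmorphM /= rmorphXn. Qed.
Lemma cF_k s L : cF (s^-1 / (-1)^+L) = (cF s)^-1 / (-1)^+L.
Proof. by rewrite rmorphM /= !fmorphV /= rmorphXn /= rmorphN1. Qed.

Lemma good_star (P Pstar : {poly CC}) (L K : nat) : reciprocal P ->
  P = ('X - 1)^+L * ('X + 1)^+K * Pstar -> ~~ root Pstar 1 -> ~~ root Pstar (-1) ->
  good Pstar.
Proof.
move=> hr hP r1 r2; have [_ [s [s0 hs]]] := recip_facts _ hr.
set d := (size P).-1 in hs.
have hm : xF - 1 != 0 by rewrite -[1](rmorph1 cF) XsubF_neq0.
have hp : xF + 1 != 0 by rewrite -[1](rmorph1 cF) XaddF_neq0.
have cs0 : cF s != 0 by rewrite fmorph_eq0.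
have := gen3 _ (cF s) xF (tofrac Pstar) (H (lp_poly Pstar)) L K d cs0 xF_neq0 hm hp.
rewrite hP -!polyC1 !Hp_mul !Hp_exp Hp_XsubC Hp_XaddC in hs.
have e1 : cF 1 = 1 := rmorph1 _.
have eP : tofrac (('X - 1%:P) ^+ L * ('X + 1%:P) ^+ K * Pstar) =
   (xF - 1) ^+ L * (xF + 1) ^+ K * tofrac Pstar.
  by rewrite !rmorphM /= Ep_XsubCn Ep_XaddCn e1.
rewrite eP e1 in hs.
move/(_ hs) => hH.
apply: (good_of _ ((s^-1 * ((-1)^+L)^-1) *: 'X^(L+K), d)); last first.
- exact: r2.
- exact: r1.
by rewrite hH E_scaleXn cF_k.
Qed.

Lemma good_Pt (P Pstar : {poly CC}) (L K : nat) : reciprocal P ->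
  P = ('X - 1)^+L * ('X + 1)^+K * Pstar -> ~~ root Pstar 1 -> ~~ root Pstar (-1) ->
  good (('X - 1) ^+ (2 * L./2) * ('X + 1) ^+ (2 * K./2) * Pstar).
Proof.
move=> hr hP r1 r2; apply: good_mul; last exact: (good_star P Pstar L K).
apply: good_mul; rewrite exprM; apply: good_exp.
  exact: good_sq_m.
exact: good_sq_p.
Qed.

Lemma gz (K : fieldType) (u c : K) (m : nat) : u != 0 -> c * c = 1 ->
  (u^-1 - c)^+(m.*2.+1) = (u - c)^+(m.*2.+1) * (- c * (u^+(m.*2.+1))^-1).
Proof.
move=> u0 hc.
have e : u^-1 - c = (u - c) * (- c * u^-1).
  apply/eqP; rewrite -subr_eq0; apply/eqP.
  have -> : u^-1 - c - (u - c) * (- c * u^-1) = (1 - c * c) * u^-1 by field.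
  by rewrite hc subrr mul0r.
rewrite e exprMn exprMn exprVn; congr (_ * (_ * _)).
by rewrite exprS -mul2n exprM sqrrN expr2 hc expr1n mulr1.
Qed.

Lemma zpow (z : CC) m : z * z = 1 -> z ^+ (m.*2.+1) = z.
Proof. by move=> hz; rewrite exprS -mul2n exprM expr2 hz expr1n mulr1. Qed.

Lemma alg3 (R : comRingType) (a h T c v : R) :
  a * T - h * (T * (- c * v)) = T * (a + c * (v * h)).
Proof. ring. Qed.

Lemma alg4 (R : comRingType) (a b c : R) : a * b * c = b * (a * c).
Proof. ring. Qed.

Lemma double0 (e : CC) : e + e = 0 -> e = 0.
Proof.
move=> h; have : 2 * e = 0 by rewrite mulr2n mulrDl mul1r.
by move/eqP; rewrite mulf_eq0 (negbTE two_neq0) /= => /eqP.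
Qed.

Lemma key_z (z : CC) (hz : z * z = 1) (m : nat) (p : laurent) :
  Ldiv (('X - z%:P)^+(m.*2.+2)) (E p - H p) -> ('X - z%:P)^+(m.*2.+1) %| p.1 ->
  ('X - z%:P)^+(m.*2.+2) %| p.1.
Proof.
move=> hL /dvdpP [u hu].
have zn0 := z0 _ hz.
set M := m.*2.+1.
set T := xF - cF z.
have hcz : cF z * cF z = 1 by rewrite -rmorphM hz rmorph1.
pose u' : laurent := (u, p.2).
pose Psi := lp_add u' (lp_scale z (lp_mul (1, M) (lp_inv u'))).
have eEp : E p = E u' * T ^+ M.
  by rewrite /E hu rmorphM /= Ep_XsubCn mulrAC.
have eHp : H p = H u' * (xF^-1 - cF z) ^+ M.
  rewrite /H hu rmorphM /= rmorphXn /= rmorphB /= map_polyX map_polyC /=.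
  by rewrite hornerM horner_exp hornerXsubC mulrAC.
have eE : E p - H p = T ^+ M * E Psi.
  rewrite eEp eHp /Psi E_add E_scale E_mul E_inv gz ?xF_neq0 //.
  have -> : E (1, M) = (xF ^+ M)^-1 by rewrite /E /= rmorph1 mul1r.
  exact: alg3.
have TM0 : T ^+ M != 0 by rewrite expf_neq0 // XsubF_neq0.
have hdiv : Ldiv ('X - z%:P) (E Psi).
  move: hL; rewrite eE => -[b hb]; exists b.
  apply: (mulfI TM0); rewrite hb Ep_XsubCn Ep_XsubC exprS.
  exact: alg4.
have := root_ev _ _ zn0 hdiv.
rewrite /Psi ev_add // ev_scale ev_mul ev_inv // zinv // /ev /= hornerC.
rewrite zpow // mul1r mulrA mulrV // mul1r => /double0 h0.
have : root u z.
  by move: h0 => /eqP; rewrite mulf_eq0 invr_eq0 expf_eq0 (negbTE zn0) andbF orbF.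
rewrite -dvdp_XsubCl => hd.
by rewrite hu exprS; apply: dvdp_mul.
Qed.

Lemma XaddC_eq (z : CC) : ('X + z%:P : {poly CC}) = 'X - (- z)%:P.
Proof. by rewrite polyCN opprK. Qed.

Lemma cop_pm (z : CC) : z * z = 1 -> coprimep ('X - z%:P) ('X + z%:P).
Proof.
move=> hz; rewrite XaddC_eq; apply: coprimep_XsubC2.
rewrite -opprD oppr_eq0; apply/eqP => /double0 e; move: (z0 _ hz); by rewrite e eqxx.
Qed.

Lemma part_z (z : CC) (hz : z * z = 1) (N : nat) (p : laurent) :
  ('X - z%:P)^+N %| p.1 * ('X - z%:P) * ('X + z%:P) ->
  Ldiv (('X - z%:P)^+N) (E p - H p) -> ('X - z%:P)^+(N./2.*2) %| p.1.
Proof.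
case: N => [|N] h1 h2; first by rewrite /= expr0 dvd1p.
have hN : ('X - z%:P)^+N %| p.1.
  have cop : coprimep (('X - z%:P)^+N) ('X + z%:P) by apply: coprimep_expl; exact: cop_pm.
  move: h1; rewrite exprSr mulrAC dvdp_mul2r ?polyXsubC_eq0 //.
  by rewrite Gauss_dvdpl.
case: (boolP (odd N)) => hodd.
  have eN : N = (N./2).*2.+1 by rewrite -{1}(odd_double_half N) hodd add1n.
  rewrite even_halfK /= ?hodd //.
  rewrite eN in h2 hN *.
  exact: key_z.
by rewrite odd_halfK /= ?hodd.
Qed.

Lemma Xm_eq : ('X - 1 : {poly CC}) = 'X - 1%:P.
Proof. by rewrite polyC1. Qed.
Lemma Xp_eq : ('X + 1 : {poly CC}) = 'X - (-1)%:P.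
Proof. by rewrite -XaddC_eq polyC1. Qed.
Lemma Xp_eq' : ('X + 1 : {poly CC}) = 'X + 1%:P.
Proof. by rewrite polyC1. Qed.
Lemma Xm_eq' : ('X - 1 : {poly CC}) = 'X + (-1)%:P.
Proof. by rewrite polyCN polyC1. Qed.

Lemma cop_star (Pstar : {poly CC}) (L K : nat) : ~~ root Pstar 1 -> ~~ root Pstar (-1) ->
  coprimep (('X - 1) ^+ L * ('X + 1) ^+ K) Pstar.
Proof.
move=> r1 r2; rewrite coprimepMl; apply/andP; split; apply: coprimep_expl; rewrite coprimep_sym.
  by rewrite Xm_eq coprimep_XsubC.
by rewrite Xp_eq coprimep_XsubC.
Qed.

Lemma K1 (P Pstar : {poly CC}) (L K : nat) : 
  P = ('X - 1)^+L * ('X + 1)^+K * Pstar -> ~~ root Pstar 1 -> ~~ root Pstar (-1) ->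
  forall p : laurent, P %| p.1 * ('X - 1) * ('X + 1) -> Ldiv P (E p - H p) ->
  ('X - 1) ^+ (2 * L./2) * ('X + 1) ^+ (2 * K./2) * Pstar %| p.1.
Proof.
move=> hP r1 r2 p h1 h2.
have dst : Pstar %| p.1.
  have : Pstar %| p.1 * ('X - 1) * ('X + 1) by apply: dvdp_trans h1; rewrite hP dvdp_mull.
  rewrite Gauss_dvdpl; last by rewrite Xp_eq coprimep_XsubC.
  by rewrite Gauss_dvdpl // Xm_eq coprimep_XsubC.
have dLK : ('X - 1)^+L * ('X + 1)^+K %| P by rewrite hP dvdp_mulr.
have dL : ('X - 1)^+L %| P by apply: dvdp_trans dLK; rewrite dvdp_mulr.
have dK : ('X + 1)^+K %| P by apply: dvdp_trans dLK; rewrite dvdp_mull.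
have hm : ('X - 1) ^+ (2 * L./2) %| p.1.
  rewrite mul2n Xm_eq; apply: (part_z 1 one1 L p).
    by rewrite -Xm_eq -Xp_eq'; apply: dvdp_trans h1.
  by rewrite -Xm_eq; apply: Ldiv_dvd h2 dL.
have hp : ('X + 1) ^+ (2 * K./2) %| p.1.
  rewrite mul2n Xp_eq; apply: (part_z (-1) m1m1 K p).
    by rewrite -Xp_eq -Xm_eq' mulrAC; apply: dvdp_trans h1.
  by rewrite -Xp_eq; apply: Ldiv_dvd h2 dK.
rewrite Gauss_dvdp ?cop_star // dst andbT Gauss_dvdp ?hm ?hp //.
rewrite coprimep_expl // coprimep_expr // Xm_eq Xp_eq coprimep_XsubC2 //.
rewrite -opprD oppr_eq0; exact: two_neq0.
Qed.

Lemma alg5 (R : comRingType) (a b c d e : R) : a * b * c * (d * e) = (a * d) * (b * e) * c.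
Proof. ring. Qed.

Lemma le_half1 L : (L <= (2 * L./2).+1)%N.
Proof. by rewrite -{1}(odd_double_half L) mul2n; case: (odd L). Qed.
Lemma le_half2 L : (2 * L./2 <= L)%N.
Proof. by rewrite -{2}(odd_double_half L) mul2n leq_addl. Qed.

Lemma K2 (P Pstar : {poly CC}) (L K : nat) :
  P = ('X - 1)^+L * ('X + 1)^+K * Pstar ->
  P %| ('X - 1) ^+ (2 * L./2) * ('X + 1) ^+ (2 * K./2) * Pstar * (('X - 1) * ('X + 1)).
Proof.
move=> ->; rewrite alg5 -!exprSr.
by apply: dvdp_mul; [apply: dvdp_mul|]; rewrite ?dvdpp // dvdp_exp2l // le_half1.
Qed.

Lemma Pt_dvd (P Pstar : {poly CC}) (L K : nat) :
  P = ('X - 1)^+L * ('X + 1)^+K * Pstar ->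
  ('X - 1) ^+ (2 * L./2) * ('X + 1) ^+ (2 * K./2) * Pstar %| P.
Proof.
move=> ->.
by apply: dvdp_mul; [apply: dvdp_mul|]; rewrite ?dvdpp // dvdp_exp2l // le_half2.
Qed.

Lemma alg6 (R : comRingType) (a b c d e f : R) : a * b * c * (d * e) * f = (a * d * f) * (b * e) * c.
Proof. ring. Qed.

Lemma notdiv (P Pstar : {poly CC}) (L K : nat) :
  P = ('X - 1)^+L * ('X + 1)^+K * Pstar -> Pstar != 0 -> odd L || odd K ->
  ~~ (P %| ('X - 1) ^+ (2 * L./2) * ('X + 1) ^+ (2 * K./2) * Pstar).
Proof.
move=> hP s0 hodd; apply/negP => hd.
set Pt := ('X - 1) ^+ (2 * L./2) * ('X + 1) ^+ (2 * K./2) * Pstar in hd.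
have ePt : P = Pt * (('X - 1) ^+ odd L * ('X + 1) ^+ odd K).
  by rewrite hP /Pt alg5 -!exprD !mul2n (addnC (L./2.*2)) (addnC (K./2.*2)) !odd_double_half.
have Pt0 : Pt != 0.
  by rewrite /Pt !mulf_neq0 // expf_neq0 // ?Xm_eq ?Xp_eq polyXsubC_eq0.
move: hd; rewrite ePt -{2}[Pt]mulr1 dvdp_mul2l // => hq.
case/orP: hodd => ho.
  have : ('X - 1) %| (1 : {poly CC}).
    by apply: dvdp_trans hq; rewrite ho expr1 dvdp_mulr.
  by rewrite Xm_eq dvdp_XsubCl /root hornerC oner_eq0.
have : ('X + 1) %| (1 : {poly CC}).
  by apply: dvdp_trans hq; rewrite ho expr1 dvdp_mull.
by rewrite Xp_eq dvdp_XsubCl /root hornerC oner_eq0.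
Qed.

Lemma Ldiv_pm1 a : ev 1 a = 0 -> ev (-1) a = 0 -> Ldiv (('X - 1) * ('X + 1)) (E a).
Proof.
move=> h1 h2; rewrite Xm_eq Xp_eq; apply: Ldiv_coprime.
- by rewrite root_XsubC eq_sym oner_eq0.
- by rewrite root_XsubC eq_sym oppr_eq0 oner_eq0.
- by rewrite coprimep_XsubC2 // -opprD oppr_eq0; exact: two_neq0.
- by apply: ev_root => //; rewrite oner_eq0.
- by apply: ev_root => //; rewrite oppr_eq0 oner_eq0.
Qed.

Lemma ev_anti r z : z * z = 1 -> H r = - E r -> ev z r = 0.
Proof.
move=> hz h; rewrite -E_inv -E_opp in h.
have := ev_eq _ _ _ (z0 _ hz) h.
rewrite ev_inv ?(z0 _ hz) // zinv // ev_opp => e.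
by apply: double0; rewrite {1}e addNr.
Qed.

Lemma alg7 (K : fieldType) (c p t u : K) : c != 0 -> u != 0 ->
  (- c^-1) * (- (c * (p * (t / u)))) * u = p * t.
Proof. by move=> h1 h2; field; rewrite h1 h2. Qed.
Lemma alg8 (K : fieldType) (u : K) : u != 0 ->
  (u^-1 - 1) * (u^-1 + 1) * u = - ((u - 1) * (u + 1) / u).
Proof. by move=> h; field. Qed.
Lemma alg9 (R : comRingType) (P B A' W B' A : R) :
  P * B * A' - W * P * B' * A = P * (B * A' + - (W * (B' * A))).
Proof. ring. Qed.

Lemma Zchar (P Pstar : {poly CC}) (L K : nat) : reciprocal P ->
  P = ('X - 1)^+L * ('X + 1)^+K * Pstar -> ~~ root Pstar 1 -> ~~ root Pstar (-1) ->
  forall x, Zid (IP P) x <->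
   (inOA x /\ lp_dvd (('X - 1) ^+ (2 * L./2) * ('X + 1) ^+ (2 * K./2) * Pstar) (ce x)
     /\ lp_dvd P (ch x)).
Proof.
move=> hr hP r1 r2 x.
have [hP0 _] := recip_facts _ hr.
have hK2 := K2 P Pstar L K hP.
have hPtP := Pt_dvd P Pstar L K hP.
have [w [hw [w1 w2]]] := good_Pt P Pstar L K hr hP r1 r2.
set Pt := ('X - 1) ^+ (2 * L./2) * ('X + 1) ^+ (2 * K./2) * Pstar in hK2 hPtP hw *.
have hPt0 : ~~ root Pt 0.
  apply: contra hP0; rewrite -!dvdp_XsubCl => h; exact: dvdp_trans h hPtP.
have e1 : cF 1 = 1 := rmorph1 _.
have e0 : cF 0 = 0 := rmorph0 _.
have H0 : H (lp_poly 0) = 0 by rewrite H_poly rmorph0 horner0.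
have H1 : H (lp_poly 1) = 1 by rewrite H_poly rmorph1 hornerC.
have E0 : E (lp_poly 0) = 0 by rewrite E_poly rmorph0.
have E1 : E (lp_poly 1) = 1 by rewrite E_poly rmorph1.
split.
- move=> [hx hall]; split => //.
  have [ex _] := (proj1 (inOA_iff x) hx).
  pose yA := Loop (lp_poly 1) (lp_poly 1) (lp_poly 0).
  have hyA : inOA yA by apply/inOA_iff; rewrite /= E1 H1 H0 E0 oppr0.
  have [_ [dA1 dA2]] := hall yA hyA.
  move/lp_dvdE: dA1; rewrite E_bre /= E1 E0 mulr1 mulr0 mulr0 subr0 => dA1.
  have dq : Ldiv P (E (ch x)).
    have := Ldiv_cF _ _ (2^-1) dA1.
    by rewrite mulrA -rmorphM mulVf ?two_neq0 // rmorph1 mul1r.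
  move/lp_dvdE: dA2; rewrite E_brh /= E1 !mulr1 ex => dA2.
  pose r : laurent := (('X - 1) * ('X + 1), 1%N).
  pose yB := Loop (lp_poly 0) (lp_poly 0) r.
  have hyB : inOA yB.
    apply/inOA_iff; rewrite /= E0 H0; split => //.
    rewrite /H /E /= expr1 -H_poly Hp_mul Xm_eq Xp_eq' Hp_XsubC Hp_XaddC e1.
    by rewrite rmorphM /= Ep_XsubC Ep_XaddC e1 alg8 // xF_neq0.
  have [_ [dB1 _]] := hall yB hyB.
  move/lp_dvdE: dB1; rewrite E_bre /= E0 mulr0 mulr0 sub0r => dB1.
  have dB : Ldiv P (E (lp_mul (ce x) (lp_poly (('X - 1) * ('X + 1))))).
    have := Ldiv_mulE _ _ (lp_poly 'X) (Ldiv_cF _ _ (- 2^-1) dB1).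
    have Er : E r = tofrac (('X - 1) * ('X + 1) : {poly CC}) / xF by rewrite /E /= expr1.
    have c2 : cF (- 2^-1) = - (cF 2)^-1 by rewrite rmorphN fmorphV.
    have c20 : cF 2 != 0 by rewrite fmorph_eq0 two_neq0.
    have eq : cF (- 2^-1) * - (cF 2 * (E (ce x) * E r)) * E (lp_poly 'X) =
      E (lp_mul (ce x) (lp_poly (('X - 1) * ('X + 1)))).
      rewrite Er c2 E_mul !E_poly.
      exact: (alg7 _ (cF 2) (E (ce x)) (tofrac (('X - 1) * ('X + 1) : {poly CC})) xF c20 xF_neq0).
    by rewrite eq.
  have h1 : P %| (ce x).1 * ('X - 1) * ('X + 1).
    by move: dB; rewrite Ldiv_num //= mulrA.
  have := K1 P Pstar L K hP r1 r2 (ce x) h1 dA2.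
  rewrite -/Pt -(Ldiv_num _ _ hPt0) -lp_dvdE => hd.
  by split => //; apply/lp_dvdE.
- move=> [hx [dp dq]]; split => // y hy; split; first exact: OA_br.
  have [ex hx2] := (proj1 (inOA_iff x) hx).
  have [ey hy2] := (proj1 (inOA_iff y) hy).
  move/lp_dvdE: dp => [b hb].
  move/lp_dvdE: dq => dq.
  have hr0 : Ldiv (('X - 1) * ('X + 1)) (E (ch y)).
    by apply: Ldiv_pm1; apply: ev_anti => //; rewrite ?one1 ?m1m1.
  split; apply/lp_dvdE.
    rewrite E_bre; apply: Ldiv_sub; apply: Ldiv_cF; first exact: Ldiv_mulE.
    rewrite hb; move: hr0 => [c ->].
    apply: Ldiv_dvd hK2; exists (lp_mul b c).
    by rewrite E_mul [tofrac (Pt * _)]rmorphM [LHS]mulrACA.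
  rewrite E_brh ex ey.
  have eHp : H (ce x) = E w * tofrac Pt * H b.
    have : E (ce x) = E (lp_mul (lp_poly Pt) b) by rewrite E_mul E_poly.
    by move/H_eq ->; rewrite H_mul hw.
  rewrite hb eHp.
  pose Phi := lp_add (lp_mul b (lp_inv (ce y))) (lp_opp (lp_mul w (lp_mul (lp_inv b) (ce y)))).
  have ePhi : E Phi = E b * H (ce y) + - (E w * (H b * E (ce y))).
    by rewrite /Phi E_add E_opp !E_mul !E_inv.
  rewrite alg9 -ePhi.
  have evPhi : forall z, z * z = 1 -> ev z w = 1 -> ev z Phi = 0.
    move=> z hz hwz; rewrite /Phi ev_add ?(z0 _ hz) // ev_opp !ev_mul !ev_inv ?(z0 _ hz) //.
    by rewrite zinv // hwz mul1r mulrCA subrr.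
  have := Ldiv_pm1 _ (evPhi 1 one1 w1) (evPhi (-1) m1m1 w2).
  move=> [c ->]; apply: Ldiv_dvd hK2; exists c.
  by rewrite [tofrac (Pt * _)]rmorphM -[in RHS]mulrA.
Qed.

Theorem lemma2 (P Pstar : {poly CC}) (L K : nat) :
  reciprocal P ->
  P = ('X - 1) ^+ L * ('X + 1) ^+ K * Pstar ->
  ~~ root Pstar 1 -> ~~ root Pstar (-1) ->
  let Pt := ('X - 1) ^+ (2 * L./2) * ('X + 1) ^+ (2 * K./2) * Pstar in
  (forall x : loop,
     Zid (IP P) x <-> (inOA x /\ lp_dvd Pt (ce x) /\ lp_dvd P (ch x))) /\
  (closed_ideal (IP P) <-> (~~ odd L /\ ~~ odd K)).
Proof.
move=> hr hP r1 r2 Pt.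
have hZ := Zchar P Pstar L K hr hP r1 r2.
split; first exact: hZ.
have [hP0 _] := recip_facts _ hr.
have hPtP := Pt_dvd P Pstar L K hP.
have hPt0 : ~~ root Pt 0.
  apply: contra hP0; rewrite -!dvdp_XsubCl => h; exact: dvdp_trans h hPtP.
have s0 : Pstar != 0 by apply/eqP => e; move: r1; rewrite e root0.
have H0 : H (lp_poly 0) = 0 by rewrite H_poly rmorph0 horner0.
have E0 : E (lp_poly 0) = 0 by rewrite E_poly rmorph0.
have E1 : E (lp_poly 1) = 1 by rewrite E_poly rmorph1.
have OA_poly : forall p, inOA (Loop (lp_poly p) (lp_inv (lp_poly p)) (lp_poly 0)).
  by move=> p; apply/inOA_iff; rewrite /= E_inv H0 E0 oppr0.
have dv0 : forall D, lp_dvd D (lp_poly 0) by move=> D; apply/lp_dvdE; rewrite E0; exact: Ldiv_0.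
have dvself : forall D, lp_dvd D (lp_poly D).
  by move=> D; apply/lp_dvdE; rewrite E_poly; exists (lp_poly 1); rewrite E1 mulr1.
have IPimpZ : forall x, IP P x -> Zid (IP P) x.
  move=> x [hx [dp dq]]; apply/hZ; split => //; split => //.
  by move/lp_dvdE: dp => dp; apply/lp_dvdE; apply: Ldiv_dvd dp hPtP.
split.
  move=> [_ [_ [_ hall]]].
  case: (boolP (odd L || odd K)) => h; last by move: h; rewrite negb_or => /andP.
  exfalso.
  have hn := notdiv P Pstar L K hP s0 h.
  have : Zid (IP P) (Loop (lp_poly Pt) (lp_inv (lp_poly Pt)) (lp_poly 0)).
    by apply/hZ; split => //; split.
  move/hall => [_ [/lp_dvdE hd _]].
  move: hd; rewrite Ldiv_num //= => hd.
  by move: hn; rewrite hd.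
move=> [eL eK].
have ePt : ('X - 1) ^+ (2 * L./2) * ('X + 1) ^+ (2 * K./2) * Pstar = P.
  by rewrite hP !mul2n !even_halfK.
split; last split; last split.
- split; first by move=> x [].
  split.
    move=> x y [/E_eq ea [/E_eq ef /E_eq eh]] [hx [dp dq]].
    have [ex hx2] := (proj1 (inOA_iff x) hx).
    split.
      apply/inOA_iff; split.
        by rewrite -ef ex; apply: H_eq.
      by rewrite -eh -hx2; apply: H_eq; rewrite eh.
    split; apply/lp_dvdE.
      by rewrite -ea; apply/lp_dvdE.
    by rewrite -eh; apply/lp_dvdE.
  split.
    split; first by apply/inOA_iff; rewrite /= E0 H0 oppr0.
    by split; apply: dv0.
  split.
    move=> x y [hx [dpx dqx]] [hy [dpy dqy]].
    have [ex hx2] := (proj1 (inOA_iff x) hx).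
    have [ey hy2] := (proj1 (inOA_iff y) hy).
    split.
      by apply/inOA_iff; rewrite /= !E_add !H_add ex ey hx2 hy2 opprD.
    split; apply/lp_dvdE; rewrite /= E_add; apply: Ldiv_add; apply/lp_dvdE => //.
  split.
    move=> c x [hx [dpx dqx]].
    have [ex hx2] := (proj1 (inOA_iff x) hx).
    split.
      by apply/inOA_iff; rewrite /= !E_scale !H_scale ex hx2 mulrN.
    split; apply/lp_dvdE; rewrite /= E_scale; apply: Ldiv_cF; apply/lp_dvdE => //.
  move=> x y hx hy; exact: ((IPimpZ x hx).2 y hy).
- exists (Loop (lp_poly P) (lp_inv (lp_poly P)) (lp_poly 0)); split.
    by split; [exact: OA_poly | split].
  move=> [/E_eq]; rewrite !E_poly => /eqP; rewrite tofrac_eq => /eqP e _.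
  by move: hP0; rewrite e root0.
- exists (Loop (lp_poly 1) (lp_inv (lp_poly 1)) (lp_poly 0)); split; first exact: OA_poly.
  move=> [_ [/lp_dvdE hd _]]; move: hd; rewrite Ldiv_num //= dvdp1 => /eqP sz.
  by move: hr => [_ [hs _]]; move: hs; rewrite sz.
- move=> x; move: (hZ x); rewrite ePt => ->.
  by [].
Qed.
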